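(* In the Banach space $\ell^\infty$ with the norm $\|\cdot\|_\infty$ topology, the set $A=\{e_1\}\cup\{e_1+e_n : n\in\mathbb{N}, n\ge 2\}$ is topologically independent but not minimal; in particular, it is not topologically linearly independent.
   Context: $e_i\in\ell^\infty$ denotes the sequence with $1$ in coordinate $i$ and $0$ elsewhere. A subset $A\subseteq X\setminus\{0\}$ of a topological vector space $X$ is topologically independent if for every neighborhood $W$ of $0$ there is a neighborhood $U$ of $0$ such that for every finite $F\subseteq A$ and integers $\{z_a: a\in F\}$, $\sum_{a\in F}z_a a\in U$ implies $z_a a\in W$ for all $a\in F$; topologically linearly independent is defined the same way with real coefficients instead of integers. $A$ is minimal if $a\notin\overline{\langle A\setminus\{a\}\rangle_{\mathbb{R}}}$ for every $a\in A$ (linear span, closure in $X$). *)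

(* Defs.v *)
From Stdlib Require Import Reals List ZArith.
Import ListNotations.
Open Scope R_scope.

(* Elements of R^N; l^oo is the set of bounded ones. *)
Definition seqR := nat -> R.

Definition bounded (x : seqR) : Prop := exists M, forall n, Rabs (x n) <= M.

(* ||x||_oo < eps, i.e. sup_n |x n| < eps (this forces x to be bounded). *)
Definition supnorm_lt (x : seqR) (eps : R) : Prop :=
  exists c, c < eps /\ forall n, Rabs (x n) <= c.

Definition zero : seqR := fun _ => 0.
Definition sub (x y : seqR) : seqR := fun n => x n - y n.
Definition scale (r : R) (x : seqR) : seqR := fun n => r * x n.

Definition nbhd0 (W : seqR -> Prop) : Prop :=
  exists eps, 0 < eps /\ forall x, supnorm_lt x eps -> W x.

(* sum_{a in F} c a * a  (F a list, used with NoDup for a finite set). *)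
Definition lincomb (c : seqR -> R) (F : list seqR) : seqR :=
  fun n => fold_right (fun a s => c a * a n + s) 0 F.

Definition subset_l00_minus0 (A : seqR -> Prop) : Prop :=
  forall a, A a -> bounded a /\ a <> zero.

Definition topologically_independent (A : seqR -> Prop) : Prop :=
  subset_l00_minus0 A /\
  forall W, nbhd0 W -> exists U, nbhd0 U /\
    forall (F : list seqR) (z : seqR -> Z),
      NoDup F -> Forall A F ->
      U (lincomb (fun a => IZR (z a)) F) ->
      forall a, In a F -> W (scale (IZR (z a)) a).

Definition topologically_linearly_independent (A : seqR -> Prop) : Prop :=
  subset_l00_minus0 A /\
  forall W, nbhd0 W -> exists U, nbhd0 U /\
    forall (F : list seqR) (z : seqR -> R),
      NoDup F -> Forall A F ->
      U (lincomb z F) ->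
      forall a, In a F -> W (scale (z a) a).

Definition span (S : seqR -> Prop) (y : seqR) : Prop :=
  exists (F : list seqR) (c : seqR -> R), Forall S F /\ y = lincomb c F.

Definition closure (S : seqR -> Prop) (x : seqR) : Prop :=
  forall eps, 0 < eps -> exists y, S y /\ supnorm_lt (sub x y) eps.

Definition minimal (A : seqR -> Prop) : Prop :=
  forall a, A a -> ~ closure (span (fun b => A b /\ b <> a)) a.

Definition e (i : nat) : seqR := fun n => if Nat.eqb n i then 1 else 0.

Definition setA (x : seqR) : Prop :=
  x = e 1 \/ exists n, (2 <= n)%nat /\ x = (fun k => e 1 k + e n k).

(* Main.v *)
Require Import Defs.
From Stdlib Require Import Reals List ZArith Lra Lia Classical ClassicalEpsilon.
Import ListNotations.
Open Scope R_scope.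

Definition f (n : nat) : seqR := fun k => e 1 k + e n k.

Lemma lc_cons c x l k : lincomb c (x :: l) k = c x * x k + lincomb c l k.
Proof. reflexivity. Qed.

Lemma lc_zero c F k : (forall b, In b F -> c b * b k = 0) -> lincomb c F k = 0.
Proof.
  induction F as [|x F IH]; intros H; [reflexivity|].
  rewrite lc_cons, H by (left; reflexivity). rewrite IH; [ring|].
  intros b Hb; apply H; right; exact Hb.
Qed.

Lemma lc_single c F a k : NoDup F -> In a F ->
  (forall b, In b F -> b <> a -> c b * b k = 0) -> lincomb c F k = c a * a k.
Proof.
  induction F as [|x F IH]; intros ND Ha H; [destruct Ha|].
  apply NoDup_cons_iff in ND as [Hx ND].
  rewrite lc_cons.
  destruct (classic (x = a)) as [->|Hne].
  - rewrite lc_zero; [ring|]. intros b Hb; apply H; [right; exact Hb|].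
    intros ->; contradiction.
  - destruct Ha as [Ha|Ha]; [contradiction|].
    rewrite H by (try left; auto). rewrite IH; auto; [ring|].
    intros b Hb; apply H; right; exact Hb.
Qed.

Lemma lc_ext c d F k : (forall a, In a F -> c a = d a) -> lincomb c F k = lincomb d F k.
Proof.
  induction F as [|x F IH]; intros H; [reflexivity|].
  rewrite !lc_cons, H by (left; reflexivity). rewrite IH; auto.
  intros a Ha; apply H; right; auto.
Qed.

Lemma e_val i n : e i n = if Nat.eqb n i then 1 else 0.
Proof. reflexivity. Qed.

Lemma e_ne i n : n <> i -> e i n = 0.
Proof. intros H; unfold e; destruct (Nat.eqb_spec n i); [contradiction|reflexivity]. Qed.

Lemma e_eq i : e i i = 1.
Proof. unfold e; rewrite Nat.eqb_refl; reflexivity. Qed.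

Lemma setA_cases b : setA b -> b = e 1 \/ exists m, (2 <= m)%nat /\ b = f m.
Proof. intros [H|[m [Hm H]]]; [left; auto|right; exists m; split; auto]. Qed.

Lemma f_inA m : (2 <= m)%nat -> setA (f m).
Proof. intros H; right; exists m; split; auto. Qed.

Lemma sA_n b n : setA b -> (2 <= n)%nat -> b <> f n -> b n = 0.
Proof.
  intros Hb Hn Hne. destruct (setA_cases b Hb) as [->|[m [Hm ->]]].
  - apply e_ne; lia.
  - destruct (Nat.eq_dec m n) as [->|Hmn]; [contradiction|].
    unfold f; rewrite !e_ne by lia; ring.
Qed.

Lemma sA_1 b : setA b -> b 1%nat = 1.
Proof.
  intros Hb. destruct (setA_cases b Hb) as [->|[m [Hm ->]]].
  - apply e_eq.
  - unfold f; rewrite e_eq, (e_ne m) by lia; ring.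
Qed.

Lemma f_n n : (2 <= n)%nat -> f n n = 1.
Proof. intros; unfold f; rewrite e_eq, e_ne by lia; ring. Qed.

Lemma int_small z : Rabs (IZR z) < 1 -> z = 0%Z.
Proof.
  intros H. destruct (Z.eq_dec z 0) as [|Hz]; auto. exfalso.
  assert (z >= 1 \/ z <= -1)%Z as [H1|H1] by lia.
  - apply Z.ge_le, IZR_le in H1. rewrite Rabs_right in H by lra. lra.
  - apply IZR_le in H1. rewrite Rabs_left in H by lra.
    lra.
Qed.

Lemma part1 : topologically_independent setA.
Proof.
  split.
  - intros a Ha. split.
    + exists 2. intros n. destruct (setA_cases a Ha) as [->|[m [Hm ->]]].
      * unfold e; destruct (Nat.eqb n 1); rewrite ?Rabs_R1, ?Rabs_R0; lra.
      * unfold f, e; destruct (Nat.eqb n 1), (Nat.eqb n m);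
        rewrite ?Rplus_0_l, ?Rplus_0_r; try (rewrite Rabs_right; lra);
        rewrite ?Rabs_R1, ?Rabs_R0; lra.
    + intros H. assert (a 1%nat = zero 1%nat) by (rewrite H; reflexivity).
      rewrite sA_1 in H0 by auto. unfold zero in H0; lra.
  - intros W [eps [Heps HW]]. exists (fun x => supnorm_lt x 1). split.
    + exists 1; split; [lra| auto].
    + intros F z ND HF [c [Hc Hb]] a Ha.
      rewrite Forall_forall in HF.
      assert (Hn : forall n, (2 <= n)%nat -> In (f n) F -> z (f n) = 0%Z).
      { intros n Hn Hin. apply int_small.
        pose proof (lc_single (fun a => IZR (z a)) F (f n) n ND Hin) as E.
        rewrite f_n in E by auto. rewrite Rmult_1_r in E.
        rewrite <- E. - eapply Rle_lt_trans; [apply Hb|exact Hc].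
        - intros b Hb' Hne. rewrite (sA_n b n) by auto. ring. }
      assert (Hz : z a = 0%Z).
      { destruct (setA_cases a (HF a Ha)) as [->|[m [Hm ->]]]; [|auto].
        apply int_small.
        pose proof (lc_single (fun a => IZR (z a)) F (e 1) 1 ND Ha) as E.
        rewrite e_eq, Rmult_1_r in E. rewrite <- E.
        - eapply Rle_lt_trans; [apply Hb|exact Hc].
        - intros b Hb' Hne. destruct (setA_cases b (HF b Hb')) as [->|[m [Hm ->]]].
          + contradiction.
          + rewrite Hn by auto. simpl. ring. }
      apply HW. exists 0. split; [lra|]. intros n. unfold scale.
      rewrite Hz. simpl. rewrite Rmult_0_l, Rabs_R0. lra.
Qed.

Lemma G_1 r s N : (2 <= s)%nat ->
  lincomb (fun _ => r) (map f (seq s N)) 1%nat = INR N * r.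
Proof.
  revert s; induction N as [|N IH]; intros s Hs; [simpl; unfold lincomb; simpl; ring|].
  simpl seq. simpl map. rewrite lc_cons, IH by lia.
  unfold f; rewrite e_eq, (e_ne s) by lia. rewrite S_INR. ring.
Qed.

Lemma G_k r s N k : k <> 1%nat ->
  lincomb (fun _ => r) (map f (seq s N)) k =
  if andb (Nat.leb s k) (Nat.ltb k (s + N)) then r else 0.
Proof.
  intros Hk. revert s; induction N as [|N IH]; intros s.
  - unfold lincomb; simpl.
    destruct (Nat.leb_spec s k), (Nat.ltb_spec k (s + 0)); simpl; try lia; reflexivity.
  - simpl seq. simpl map. rewrite lc_cons, IH. unfold f. rewrite (e_ne 1) by auto.
    unfold e at 1.
    destruct (Nat.eqb_spec k s), (Nat.leb_spec s k), (Nat.ltb_spec k (s + S N)),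
      (Nat.leb_spec (S s) k), (Nat.ltb_spec k (S s + N)); simpl; try lia; ring.
Qed.

Lemma G_k_bound r s N k : k <> 1%nat -> 0 <= r ->
  0 <= lincomb (fun _ => r) (map f (seq s N)) k <= r.
Proof.
  intros Hk Hr. rewrite G_k by auto.
  destruct (andb _ _); lra.
Qed.

Lemma G_forall s N : (2 <= s)%nat -> Forall (fun b => setA b /\ b <> e 1) (map f (seq s N)).
Proof.
  intros Hs. rewrite Forall_forall. intros b Hb.
  apply in_map_iff in Hb as [m [<- Hm]]. apply in_seq in Hm.
  split; [apply f_inA; lia|]. intros H.
  assert (f m m = e 1 m) by (rewrite H; reflexivity).
  rewrite f_n, e_ne in H0 by lia. lra.
Qed.

Lemma small_N eps : 0 < eps -> exists N, (1 <= N)%nat /\ / INR N < eps.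
Proof.
  intros H. destruct (archimed_cor1 eps H) as [N [H1 H2]]. exists N; split; [lia|auto].
Qed.

Lemma INR_pos N : (1 <= N)%nat -> 0 < INR N.
Proof. intros; apply lt_0_INR; lia. Qed.

Lemma part2 : ~ minimal setA.
Proof.
  intros Hm. apply (Hm (e 1) (or_introl eq_refl)).
  intros eps Heps. destruct (small_N eps Heps) as [N [HN Hlt]].
  pose proof (INR_pos N HN) as HNp.
  set (r := / INR N).
  assert (Hr : 0 < r) by (apply Rinv_0_lt_compat; auto).
  exists (lincomb (fun _ => r) (map f (seq 2 N))). split.
  - exists (map f (seq 2 N)), (fun _ => r). split; [apply G_forall; lia|reflexivity].
  - exists r. split; [exact Hlt|]. intros k. unfold sub.
    destruct (Nat.eq_dec k 1) as [->|Hk].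
    + rewrite G_1 by lia. rewrite e_eq. unfold r. rewrite Rinv_r by lra.
      replace (1 - 1) with 0 by ring. rewrite Rabs_R0; apply Rlt_le, Rinv_0_lt_compat; auto.
    + rewrite e_ne by auto. pose proof (G_k_bound r 2 N k Hk (Rlt_le _ _ Hr)).
      rewrite Rabs_left1 by lra. lra.
Qed.

Lemma part3 : ~ topologically_linearly_independent setA.
Proof.
  intros [_ H]. destruct (H (fun x => supnorm_lt x (1/2))) as [U [[d [Hd HU]] HUW]].
  { exists (1/2). split; [lra|auto]. }
  destruct (small_N d Hd) as [N [HN Hlt]].
  pose proof (INR_pos N HN) as HNp.
  set (r := / INR N).
  assert (Hr : 0 < r) by (apply Rinv_0_lt_compat; auto).
  set (z := fun a : seqR => if excluded_middle_informative (a = e 1) then -1 else r).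
  set (G := map f (seq 2 N)).
  assert (HG := G_forall 2 N (le_n 2)). fold G in HG. rewrite Forall_forall in HG.
  assert (Hzs : forall k, lincomb z G k = lincomb (fun _ => r) G k).
  { intros k. apply lc_ext. intros a Ha. unfold z.
    destruct (excluded_middle_informative (a = e 1)); auto.
    exfalso; apply (HG a Ha); auto. }
  assert (W1 : supnorm_lt (scale (z (e 1)) (e 1)) (1/2)).
  { apply (HUW (e 1 :: G)).
    - constructor.
      + intros Hin. apply (HG _ Hin). reflexivity.
      + unfold G. apply NoDup_map_NoDup_ForallPairs; [|apply seq_NoDup].
        intros m1 m2 H1 H2 Heq. apply in_seq in H1; apply in_seq in H2.
        assert (f m1 m1 = f m2 m1) by (rewrite Heq; reflexivity).
        rewrite f_n in H0 by lia. unfold f in H0. rewrite e_ne in H0 by lia.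
        unfold e in H0. destruct (Nat.eqb_spec m1 m2); auto. lra.
    - constructor; [left; reflexivity|]. rewrite Forall_forall. intros; apply HG; auto.
    - apply HU. exists r. split; [exact Hlt|]. intros k.
      rewrite lc_cons, Hzs. unfold z at 1.
      destruct (excluded_middle_informative (e 1 = e 1)) as [_|C]; [|congruence].
      destruct (Nat.eq_dec k 1) as [->|Hk].
      + unfold G; rewrite G_1 by lia. rewrite e_eq. unfold r. rewrite Rinv_r by lra.
        replace (-1 * 1 + 1) with 0 by ring. rewrite Rabs_R0; apply Rlt_le, Rinv_0_lt_compat; auto.
      + rewrite e_ne by auto. unfold G.
        pose proof (G_k_bound r 2 N k Hk (Rlt_le _ _ Hr)).
        rewrite Rabs_right by lra. lra.
    - left; reflexivity. }
  destruct W1 as [c [Hc Hb]]. specialize (Hb 1%nat). unfold scale, z in Hb.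
  destruct (excluded_middle_informative (e 1 = e 1)) as [_|C]; [|congruence].
  rewrite e_eq in Hb. replace (-1 * 1) with (-1) in Hb by ring.
  rewrite Rabs_left in Hb by lra. lra.
Qed.

Theorem mainTheorem13 :
  topologically_independent setA /\ ~ minimal setA /\
  ~ topologically_linearly_independent setA.
Proof. split; [exact part1|split; [exact part2|exact part3]]. Qed.
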